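(* Let $P$ be a locally finite poset, $R$ a commutative unital ring and $n\ge 2$. For every integer $k\ge 0$, the submodule $J^n_k(P,R)$ is a (two-sided) ideal of $I^n(P,R)$.
   Context: For a poset $P$ and $n\ge 2$, $P^n_\le=\{(x_1,\dots,x_n)\in P^n: x_1\le\dots\le x_n\}$. For $\mathbf{x}=(x_1,\dots,x_n)\in P^n_\le$, $\mathcal{I}(\mathbf{x})=[x_1,x_2]\times\dots\times[x_{n-1},x_n]$, where $[a,b]=\{c\in P: a\le c\le b\}$. $I^n(P,R)$ is the $R$-module of functions $f:P^n_\le\to R$ with multiplication $(fg)(\mathbf{x})=\sum_{\mathbf{y}\in\mathcal{I}(\mathbf{x})}f(x_1,\mathbf{y})g(\mathbf{y},x_n)$. For $a\le b$, $l(a,b)$ is the length of the interval $[a,b]$, i.e. the maximum of $|C|-1$ over chains $C\subseteq[a,b]$. $J^n_k(P,R)=\{f\in I^n(P,R): f(x_1,\dots,x_n)=0 \text{ whenever } l(x_1,x_n)<k\}$. An ideal is an $R$-submodule $I$ with $I^n(P,R)\,I\subseteq I$ and $I\,I^n(P,R)\subseteq I$. *)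

(* Defs.v *)
From HB Require Import structures.
From mathcomp Require Import all_boot all_order all_algebra.
From mathcomp Require Import boolp classical_sets functions cardinality fsbigop.
Set Implicit Arguments. Unset Strict Implicit. Unset Printing Implicit Defensive.
Import Order.TTheory GRing.Theory.
Local Open Scope classical_set_scope.
Local Open Scope order_scope.

(* Points of P^n are represented as sequences x = [:: x_1; ...; x_n];
   P^n_<= is the set of such sequences of size n that are sorted by <=.
   Elements of I^n(P,R) are represented as functions seq P -> R; only their
   values on P^n_<= matter (all notions below only inspect those values). *)

Section IncidenceDefs.
Context {d : Order.disp_t} (P : porderType d).

Definition itv (a b : P) : set P := [set c | a <= c <= b].

Definition locally_finite : Prop := forall a b : P, finite_set (itv a b).

Definition chains_n (n : nat) : set (seq P) :=
  [set x | size x = n /\ sorted <=%O x].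

(* I(x) = [x_1,x_2] x ... x [x_{n-1},x_n], as a set of sequences of size n-1 *)
Fixpoint Iset (x : seq P) : set (seq P) :=
  match x with
  | a :: ((b :: _) as t) =>
      [set y | exists c ys, y = c :: ys /\ a <= c <= b /\ Iset t ys]
  | _ => [set [::]]
  end.

(* finite chains in [a,b], represented as strictly increasing sequences;
   the cardinality of the chain is the size of the sequence *)
Definition chain_in (a b : P) (s : seq P) : Prop :=
  sorted <%O s /\ (forall c, c \in s -> a <= c <= b).

Definition is_length (a b : P) (m : nat) : Prop :=
  (exists s, chain_in a b s /\ size s = m.+1) /\
  (forall s, chain_in a b s -> (size s <= m.+1)%N).

Definition ilen (a b : P) : nat := xget 0%N [set m | is_length a b m].

Variable R : comPzRingType.
Local Open Scope ring_scope.

Definition imul (f g : seq P -> R) : seq P -> R := fun x =>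
  match x with
  | [::] => 0
  | x1 :: t => \sum_(y \in Iset x) f (x1 :: y) * g (rcons y (last x1 t))
  end.

Definition Jnk (n k : nat) : set (seq P -> R) :=
  [set f | forall x1 t, chains_n n (x1 :: t) ->
             (ilen x1 (last x1 t) < k)%N -> f (x1 :: t) = 0].

Definition is_ideal (I : set (seq P -> R)) : Prop :=
  [/\ I (fun _ => 0),
      (forall f g, I f -> I g -> I (fun x => f x + g x)),
      (forall (r : R) f, I f -> I (fun x => r * f x)),
      (forall f g, I g -> I (imul f g)) &
      (forall f g, I f -> I (imul f g))].

End IncidenceDefs.

(* Main.v *)
Require Import Defs.
From HB Require Import structures.
From mathcomp Require Import all_boot all_order all_algebra.
From mathcomp Require Import boolp classical_sets functions cardinality fsbigop.
Set Implicit Arguments. Unset Strict Implicit. Unset Printing Implicit Defensive.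
Import Order.TTheory GRing.Theory.
Local Open Scope classical_set_scope.
Local Open Scope order_scope.

Section Aux.
Context {d : Order.disp_t} (P : porderType d).

Lemma path_last (a : P) s : path <=%O a s -> a <= last a s.
Proof.
elim: s a => [|b s IH] a /=; first by [].
by case/andP=> ab /IH; apply: le_trans.
Qed.

Lemma Iset_prop (t : seq P) : forall (a : P) y, sorted <=%O (a :: t) ->
  Iset (a :: t) y -> size y = size t /\ path <=%O a (rcons y (last a t)).
Proof.
elim: t => [|b t IH] a y /=.
  by move=> _ ->; rewrite /= lexx.
case/andP=> ab Hs [c [ys [-> [/andP[ac cb] Hys]]]].
have [Hsz Hp] := IH b ys Hs Hys.
split; first by rewrite /= Hsz.
rewrite /= ac /=; exact: (path_le (@le_trans _ P) cb Hp).
Qed.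

Lemma len_exists (a b : P) : locally_finite P -> a <= b ->
  exists m, is_length a b m.
Proof.
move=> lf ab.
have [e He] : exists e : seq P, itv a b = [set` e] by apply/finite_seqP.
pose Q := fun m => `[< exists s, chain_in a b s /\ size s = m.+1 >].
have bnd s : chain_in a b s -> (size s <= size e)%N.
  case=> Hs Hin; apply: uniq_leq_size; first exact: lt_sorted_uniq.
  by move=> c /Hin Hc; have : itv a b c by []; rewrite He.
have exQ : exists i, Q i.
  exists 0%N; apply/asboolP; exists [:: a]; split => //; split => //.
  by move=> c; rewrite inE => /eqP ->; rewrite lexx ab.
have ubQ : forall i, Q i -> (i <= size e)%N.
  move=> i /asboolP [s [/bnd Hs Hsz]]; rewrite Hsz in Hs; exact: ltnW.
case: (ex_maxnP exQ ubQ) => m Qm Hmax.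
exists m; split; first exact/asboolP.
move=> s Hs; case Es: (size s) => [|m'] //.
have : Q m' by apply/asboolP; exists s.
by move/Hmax.
Qed.

Lemma ilen_mono (a b a' b' : P) : locally_finite P -> a <= a' -> a' <= b' ->
  b' <= b -> (ilen a' b' <= ilen a b)%N.
Proof.
move=> lf aa' ab' bb.
have ab : a <= b by apply: le_trans aa' (le_trans ab' bb).
have [m Hm] := len_exists lf ab.
have Hl : is_length a b (ilen a b) by apply: xgetPex; exists m.
rewrite /ilen; case: xgetP => [m' _ [[s [[Hs Hin] Hsz]] _]|_]; last by [].
have : chain_in a b s.
  split => // c /Hin /andP[h1 h2].
  by rewrite (le_trans aa' h1) (le_trans h2 bb).
by move/(proj2 Hl); rewrite Hsz.
Qed.

End Aux.

Theorem lemma2p1 (d : Order.disp_t) (P : porderType d) (R : comPzRingType)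
  (n : nat) (hP : locally_finite P) (hn : (2 <= n)%N) (k : nat) :
  is_ideal (@Jnk d P R n k).
Proof.
split.
- by move=> x1 t _ _.
- by move=> f g Hf Hg x1 t Hc Hl; rewrite Hf // Hg // GRing.addr0.
- by move=> r f Hf x1 t Hc Hl; rewrite Hf // GRing.mulr0.
- move=> f g Hg x1 t [Hsz Hs] Hl /=.
  apply: fsbig1 => y Hy.
  have [Hys Hp] := Iset_prop Hs Hy.
  set l := last x1 t in Hp Hl *.
  case Ez: (rcons y l) Hp => [|z1 zt]; first by case: (y) Ez => [|? ?].
  move=> /= /andP[xz Hzt].
  rewrite Hg ?GRing.mulr0 //.
    split => //; rewrite -Ez size_rcons Hys; by [].
  have Hlast : last z1 zt = l by rewrite -[last z1 zt]/(last x1 (z1 :: zt)) -Ez last_rcons.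
  rewrite Hlast; apply: leq_ltn_trans Hl.
  apply: ilen_mono => //; first by rewrite -Hlast; exact: path_last.
- move=> f g Hf x1 t [Hsz Hs] Hl /=.
  apply: fsbig1 => y Hy.
  have [Hys Hp] := Iset_prop Hs Hy.
  set l := last x1 t in Hp Hl *.
  move: Hp; rewrite rcons_path => /andP[Hp Hyl].
  rewrite Hf ?GRing.mul0r //.
    by split => //=; rewrite Hys.
  apply: leq_ltn_trans Hl.
  apply: ilen_mono => //; first exact: path_last.
Qed.
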